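(* Let $m\ge2$, $k\ge2$, $n\ge1$, $\mathcal{A}=(a_{i_1i_2\cdots i_m})\in\mathbb{C}^{[m,n]}$ and $\mathcal{B}=(b_{i_1i_2\cdots i_k})\in\mathbb{C}^{[k,n]}$, and suppose the digraph $\Gamma_{\mathcal{A}\mathcal{B}}$ is weakly connected. For $i\in[n]$ let $c_{i\cdots i}=\sum_{i_2,\ldots,i_m=1}^n a_{ii_2\cdots i_m}b_{i_2i\cdots i}\cdots b_{i_mi\cdots i}$ (the diagonal entries of $\mathcal{A}\mathcal{B}$). Then \[\sigma(\mathcal{A}\mathcal{B})\subseteq\mathbf{B}=\bigcup_{\gamma\in C(\mathcal{A}\mathcal{B})}\Big\{z\in\mathbb{C}:\prod_{i\in\gamma}|z-c_{i\cdots i}|\le\prod_{i\in\gamma}\big(r_i(\mathcal{A})(R(\mathcal{B}))^{m-1}-|c_{i\cdots i}|\big)\Big\}\subseteq\mathbf{G},\] where $\mathbf{G}=\bigcup_{i\in[n]}\{z\in\mathbb{C}:|z-c_{i\cdots i}|\le r_i(\mathcal{A})(R(\mathcal{B}))^{m-1}-|c_{i\cdots i}|\}$.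
   Context: $[n]=\{1,\ldots,n\}$. $\mathbb{C}^{[m,n]}$ denotes the set of order $m$, dimension $n$ complex tensors. For a tensor $\mathcal{T}=(t_{i_1\cdots i_p})$ of order $p$ and dimension $n$: $r_i(\mathcal{T})=\sum_{i_2,\ldots,i_p=1}^n|t_{ii_2\cdots i_p}|$, $R(\mathcal{T})=\max_{i\in[n]}r_i(\mathcal{T})$. General product: $\mathcal{A}\mathcal{B}=(c_{i\alpha_1\cdots\alpha_{m-1}})$ is the order $(m-1)(k-1)+1$, dimension $n$ tensor with $c_{i\alpha_1\cdots\alpha_{m-1}}=\sum_{i_2,\ldots,i_m=1}^n a_{ii_2\cdots i_m}b_{i_2\alpha_1}\cdots b_{i_m\alpha_{m-1}}$, $i\in[n]$, $\alpha_j\in[n]^{k-1}$ (where $b_{j\alpha}$ with $\alpha=(j_2,\ldots,j_k)$ means $b_{jj_2\cdots j_k}$). Eigenvalues of a tensor $\mathcal{T}$ of order $p\ge2$: $\lambda\in\mathbb{C}$ such that there is a nonzero $x\in\mathbb{C}^n$ with $\sum_{i_2,\ldots,i_p=1}^n t_{ii_2\cdots i_p}x_{i_2}\cdots x_{i_p}=\lambda x_i^{p-1}$ for all $i\in[n]$; $\sigma(\mathcal{T})$ is the set of eigenvalues. Digraph: for a tensor $\mathcal{T}=(t_{i_1\cdots i_p})$ of dimension $n$, $\Gamma_{\mathcal{T}}$ has vertex set $[n]$ and arc set $\{(i,j): t_{ii_2\cdots i_p}\neq0 \text{ for some } (i_2,\ldots,i_p)\neq(i,\ldots,i) \text{ with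 } j\in\{i_2,\ldots,i_p\}\}$. A circuit is a sequence of distinct vertices $i_1,\ldots,i_q$ ($q\ge1$) with arcs $(i_1,i_2),\ldots,(i_{q-1},i_q),(i_q,i_1)$ (for $q=1$, a loop $(i_1,i_1)$); $C(\mathcal{T})$ is the set of circuits of $\Gamma_{\mathcal{T}}$, and $i\in\gamma$ means $i$ is a vertex of the circuit $\gamma$. $\Gamma_{\mathcal{T}}$ is called weakly connected if every vertex belongs to some circuit. *)

(* Defs.v *)
From HB Require Import structures.
From mathcomp Require Import all_boot all_order all_algebra.
Set Implicit Arguments. Unset Strict Implicit. Unset Printing Implicit Defensive.
Import Order.TTheory GRing.Theory Num.Theory.
Local Open Scope ring_scope.

(* An order-p (p >= 1), dimension-n tensor T = (t_{i i_2 ... i_p}) is encoded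
   as a function of its first index i and of the ffun (i_2,...,i_p) of the
   remaining p-1 indices. *)
Definition tensor (C : Type) (p n : nat) := 'I_n -> {ffun 'I_p.-1 -> 'I_n} -> C.

Section Tensors.
Variable C : numClosedFieldType.

Definition rowsum p n (T : tensor C p n) (i : 'I_n) : C :=
  \sum_(t : {ffun 'I_p.-1 -> 'I_n}) `|T i t|.

(* R(T) = max_i r_i(T)  (the r_i are nonnegative reals, 0 is a neutral) *)
Definition Rmax p n (T : tensor C p n) : C :=
  \big[Num.max/0]_(i < n) rowsum T i.

(* General product AB, of order (m-1)(k-1)+1: the remaining index
   (alpha_1,...,alpha_{m-1}), alpha_j in [n]^{k-1}, is stored blockwise,
   component l of alpha_j at position mxvec_index j l. *)
Definition tprod m k n (A : tensor C m n) (B : tensor C k n)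
  : tensor C ((m.-1 * k.-1).+1) n :=
  fun i alpha =>
    \sum_(t : {ffun 'I_m.-1 -> 'I_n})
       A i t * \prod_(j < m.-1) B (t j) [ffun l : 'I_k.-1 => alpha (mxvec_index j l)].

Definition tdiag p n (T : tensor C p n) (i : 'I_n) : C := T i [ffun => i].

Definition teigen p n (T : tensor C p n) (lambda : C) : Prop :=
  exists x : 'I_n -> C, (exists i, x i != 0) /\
    forall i, \sum_(t : {ffun 'I_p.-1 -> 'I_n}) T i t * \prod_(l < p.-1) x (t l)
              = lambda * x i ^+ p.-1.

Definition tarc p n (T : tensor C p n) (i j : 'I_n) : Prop :=
  exists t : {ffun 'I_p.-1 -> 'I_n},
    [/\ T i t != 0, t != [ffun => i] & exists l, t l = j].

Definition tcircuit p n (T : tensor C p n) (s : seq 'I_n) : Prop :=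
  [/\ s != [::], uniq s &
      (forall q : nat, (q < size s)%N ->
         forall d : 'I_n, tarc T (nth d s q) (nth d s ((q.+1) %% size s)%N))].

Definition weakly_connected p n (T : tensor C p n) : Prop :=
  forall i : 'I_n, exists s, tcircuit T s /\ i \in s.

End Tensors.

(* Main.v *)
Require Import Defs.
From HB Require Import structures.
From mathcomp Require Import all_boot all_order all_algebra.
Import Order.TTheory GRing.Theory Num.Theory.
Lemma exists_cycle (T : finType) (f : T -> T) (x0 : T) :
  exists y d, [/\ 0 < d, iter d f y = y, uniq (traject f y d) & fconnect f x0 y].
Proof.
have : looping f x0 #|T|.
  apply/negbNE; rewrite -looping_uniq; apply/negP => /card_uniqP.
  rewrite size_traject => h; have := max_card (mem (traject f x0 #|T|.+1)).
  by rewrite h ltnn.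
case/trajectP => a lt_a eqa.
pose P d := [exists y, [&& 0 < d, iter d f y == y & fconnect f x0 y]].
have exP : exists d, P d.
  exists (#|T| - a); apply/existsP; exists (iter a f x0).
  rewrite subn_gt0 lt_a -iterD subnK ?(ltnW lt_a) // eqa eqxx /=.
  exact: fconnect_iter.
case: (ex_minnP exP) => d /existsP [y /and3P [d0 /eqP dy cy]] dmin.
exists y, d; split=> //.
case: d d0 dy dmin => // d' _ dy dmin.
rewrite looping_uniq; apply/negP => /trajectP [b lt_b eqb].
have : P b.+1.
  apply/existsP; exists y; rewrite cy andbT /= -eqb -iterS dy eqxx //.
by move/dmin; rewrite ltnS leqNgt lt_b.
Qed.

Lemma map_traject (T : Type) (f : T -> T) x n :
  map f (traject f x n) = traject f (f x) n.
Proof. by elim: n x => //= n IH x; rewrite IH. Qed.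

Lemma perm_cycle (T : eqType) (f : T -> T) y d : 0 < d -> iter d f y = y ->
  perm_eq (map f (traject f y d)) (traject f y d).
Proof.
case: d => // d _ dy; rewrite map_traject trajectSr trajectS -iterSr dy.
by rewrite perm_rcons.
Qed.

Local Open Scope ring_scope.
Section S.
Variable C : numClosedFieldType.

Lemma max_ub (x y : C) : 0 <= x -> 0 <= y ->
  [/\ x <= Num.max x y, y <= Num.max x y & 0 <= Num.max x y].
Proof.
move=> hx hy; rewrite /Order.max.
have rx : x \is Num.real by rewrite ger0_real.
have ry : y \is Num.real by rewrite ger0_real.
case: ifP => [/ltW h|]; first by rewrite h lexx.
by move/negbT; rewrite -real_leNgt // => h; rewrite h lexx.
Qed.

Lemma bigmax_ub n (F : 'I_n -> C) : (forall i, 0 <= F i) ->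
  0 <= \big[Num.max/0]_(i < n) F i /\ forall i, F i <= \big[Num.max/0]_(i < n) F i.
Proof.
elim: n F => [|n IH] F F0; first by rewrite big_ord0 lexx; split=> // -[].
rewrite big_ord_recl /=.
have [h1 h2] := IH (fun i => F (lift ord0 i)) (fun i => F0 _).
have [l1 l2 l3] := @max_ub _ _ (F0 ord0) h1.
split=> // i; case: (unliftP ord0 i) => [j ->|->] //.
exact: le_trans (h2 j) l2.
Qed.

Lemma Rmax_ub p n (T : tensor C p n) : 0 <= Rmax T /\ forall i, rowsum T i <= Rmax T.
Proof. apply: bigmax_ub => i; apply: sumr_ge0 => ? _; exact: normr_ge0. Qed.

Lemma reindex_blk a b n (g : 'I_a -> {ffun 'I_b -> 'I_n} -> C) :
  \sum_(alpha : {ffun 'I_(a * b) -> 'I_n})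
     \prod_(j < a) g j [ffun l => alpha (mxvec_index j l)]
  = \prod_(j < a) \sum_(beta : {ffun 'I_b -> 'I_n}) g j beta.
Proof.
rewrite bigA_distr_bigA /=.
pose h (F : {ffun 'I_a -> {ffun 'I_b -> 'I_n}}) : {ffun 'I_(a * b) -> 'I_n} :=
  [ffun q => let jl := enum_val (cast_ord (esym (mxvec_cast a b)) q) in F jl.1 jl.2].
pose h' (al : {ffun 'I_(a * b) -> 'I_n}) : {ffun 'I_a -> {ffun 'I_b -> 'I_n}} :=
  [ffun j => [ffun l => al (mxvec_index j l)]].
have hK : forall F, h' (h F) = F.
  move=> F; apply/ffunP => j; apply/ffunP => l; rewrite !ffunE /mxvec_index.
  by rewrite cast_ordK enum_rankK.
rewrite (reindex h) /=; last first.
  exists h' => [F _|al _]; first exact: hK.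
  apply/ffunP => q; rewrite !ffunE; case/mxvec_indexP: q => j l.
  by rewrite /mxvec_index cast_ordK enum_rankK /= !ffunE.
apply: eq_bigr => F _; apply: eq_bigr => j _; congr (g j _).
by rewrite -[in RHS](hK F) ffunE.
Qed.

Lemma rowsum_prod m k n (A : tensor C m n) (B : tensor C k n) i :
  rowsum (tprod A B) i <= rowsum A i * Rmax B ^+ m.-1.
Proof.
rewrite /rowsum /tprod /=.
apply: le_trans (_ : \sum_(alpha : {ffun 'I_(m.-1 * k.-1) -> 'I_n})
   \sum_(t : {ffun 'I_m.-1 -> 'I_n}) `|A i t| *
     \prod_(j < m.-1) `|B (t j) [ffun l => alpha (mxvec_index j l)]| <= _).
  apply: ler_sum => alpha _; apply: le_trans (ler_norm_sum _ _ _) _.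
  by apply: ler_sum => t _; rewrite normrM normr_prod.
rewrite exchange_big /= mulr_suml; apply: ler_sum => t _.
rewrite -mulr_sumr; apply: ler_wpM2l => //.
rewrite (@reindex_blk _ _ _ (fun j beta => `|B (t j) beta|)).
have [R0 Rub] := Rmax_ub _ _ B.
have -> : Rmax B ^+ m.-1 = \prod_(j < m.-1) Rmax B by rewrite prodr_const card_ord.
apply: ler_prod => j _.
rewrite Rub andbT; apply: sumr_ge0 => ? _; exact: normr_ge0.
Qed.

Definition arcb p n (T : tensor C p n) (i j : 'I_n) : bool :=
  [exists t, [&& T i t != 0, t != [ffun => i] & [exists l, t l == j]]].
Arguments arcb {p n}.

Lemma arcbP p n (T : tensor C p n) i j : tarc T i j <-> arcb T i j.
Proof.
split.
  case=> t [h1 h2 [l hl]]; apply/existsP; exists t; rewrite h1 h2 /=.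
  by apply/existsP; exists l; rewrite hl.
case/existsP => t /and3P [h1 h2 /existsP [l /eqP hl]]; exists t; split=> //.
by exists l.
Qed.

Lemma eig_ineq N n (T : tensor C N.+1 n) (x : 'I_n -> C) lam i M :
  \sum_(t : {ffun 'I_N -> 'I_n}) T i t * \prod_(l < N) x (t l) = lam * x i ^+ N ->
  0 <= M -> (forall j, arcb T i j -> `|x j| <= M) ->
  `|lam - tdiag T i| * `|x i| ^+ N <= (rowsum T i - `|tdiag T i|) * M ^+ N.
Proof.
move=> E M0 HM.
pose t0 : {ffun 'I_N -> 'I_n} := [ffun => i].
have P0 : \prod_(l < N) x (t0 l) = x i ^+ N.
  by rewrite (eq_bigr (fun _ => x i)) ?prodr_const ?card_ord // => l _; rewrite ffunE.
rewrite (bigD1 t0) //= P0 in E.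
have E2 : (lam - tdiag T i) * x i ^+ N
     = \sum_(t | t != t0) T i t * \prod_(l < N) x (t l).
  by rewrite mulrBl -E /tdiag addrAC subrr add0r.
have -> : rowsum T i - `|tdiag T i| = \sum_(t | t != t0) `|T i t|.
  by rewrite /rowsum (bigD1 t0) //= addrAC subrr add0r.
rewrite -normrX -normrM E2 mulr_suml.
apply: le_trans (ler_norm_sum _ _ _) _; apply: ler_sum => t tt0.
rewrite normrM normr_prod.
case: (eqVneq (T i t) 0) => [->|Tnz]; first by rewrite normr0 !mul0r.
apply: ler_wpM2l => //.
have -> : M ^+ N = \prod_(l < N) M by rewrite prodr_const card_ord.
apply: ler_prod => l _; rewrite normr_ge0 /=; apply: HM; apply/existsP; exists t.
by rewrite Tnz tt0 /=; apply/existsP; exists l.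
Qed.
End S.
Arguments arcb {C p n}.
Arguments eig_ineq {C N n T x lam i M}.
Arguments arcbP {C p n T i j}.

Theorem theorem4p4 (C : numClosedFieldType) (m k n : nat)
  (A : tensor C m n) (B : tensor C k n) :
  (2 <= m)%N -> (2 <= k)%N -> (1 <= n)%N ->
  weakly_connected (tprod A B) ->
  let c := tdiag (tprod A B) in
  let rad := fun i => rowsum A i * Rmax B ^+ m.-1 - `|c i| in
  let inB := fun z : C => exists s : seq 'I_n, tcircuit (tprod A B) s /\
       \prod_(i <- s) `|z - c i| <= \prod_(i <- s) rad i in
  let inG := fun z : C => exists i : 'I_n, `|z - c i| <= rad i in
  (forall z, teigen (tprod A B) z -> inB z) /\ (forall z, inB z -> inG z).
Proof.
move=> m2 k2 n1 wc c rad inB inG.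
set T := tprod A B.
have cle i : `|c i| <= rowsum T i.
  rewrite /rowsum (bigD1 [ffun => i]) //= lerDl.
  by apply: sumr_ge0 => ? _; exact: normr_ge0.
have rad0 i : 0 <= rad i.
  by rewrite subr_ge0; apply: le_trans (cle i) (@rowsum_prod _ _ _ _ A B i).
split; last first.
  move=> z [s [[s0 _ _] H]].
  case: (boolP [exists i, `|z - c i| <= rad i]) => [/existsP //|/existsPn h].
  have L : \prod_(i <- s) rad i < \prod_(i <- s) `|z - c i|.
    apply: ltr_prod; first by rewrite has_predT lt0n size_eq0.
    by move=> i _; rewrite rad0 /= real_ltNge ?h // ger0_real.
  by have := le_lt_trans H L; rewrite ltxx.
move=> z [x [[i0 xi0] E]].
case: (boolP [exists j, z == c j]) => [/existsP [j /eqP zj]|/existsPn zc].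
  have [s [cs js]] := wc j; exists s; split=> //.
  rewrite (big_rem j) //= zj subrr normr0 mul0r.
  by apply: prodr_ge0 => i _; exact: rad0.
have hout i : exists j, arcb T i j.
  have [s [[s0 us hs] is_]] := wc i.
  have := hs (index i s) _ i; rewrite index_mem is_ nth_index // => /(_ isT).
  by move/arcbP => h; eexists; exact: h.
have hmax i : exists j, arcb T i j && [forall j', arcb T i j' ==> (`|x j'| <= `|x j|)].
  have [j0 h0] := hout i.
  case: (@real_arg_maxP _ _ j0 (arcb T i) (fun j => `|x j|) h0) => [j _|j hj jmax].
    exact: normr_real.
  by exists j; rewrite hj /=; apply/forallP => j'; apply/implyP; exact: jmax.
pose f i := xchoose (hmax i).
have fP i : arcb T i (f i) /\ forall j', arcb T i j' -> `|x j'| <= `|x (f i)|.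
  have /andP [h1 /forallP h2] := xchooseP (hmax i).
  by split=> // j'; move/implyP: (h2 j').
set N := (m.-1 * k.-1)%N.
have N0 : (0 < N)%N by rewrite /N muln_gt0; case: (m) m2 => [|[|?]] //; case: (k) k2 => [|[|?]].
have key i : `|z - c i| * `|x i| ^+ N <= rad i * `|x (f i)| ^+ N.
  apply: le_trans (eig_ineq (E i) (normr_ge0 _) (proj2 (fP i))) _.
  apply: ler_wpM2r; first by rewrite exprn_ge0.
  by rewrite lerB // rowsum_prod.
have supp i : x i != 0 -> x (f i) != 0.
  move=> xi; apply/negP => /eqP xf; have := key i.
  rewrite xf normr0 expr0n /= (gtn_eqF N0) /= mulr0 => h.
  have : 0 < `|z - c i| * `|x i| ^+ N.
    by rewrite mulr_gt0 // ?normr_gt0 ?subr_eq0 ?zc // exprn_gt0 // normr_gt0.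
  by move/lt_le_trans => /(_ _ h); rewrite ltxx.
have suppI a : x (iter a f i0) != 0 by elim: a => //= a IH; exact: supp.
have [y [d [d0 dy uq cy]]] := @exists_cycle _ f i0.
have yE := iter_findex cy.
have suppS j : j \in traject f y d -> x j != 0.
  by case/trajectP => q _ ->; rewrite -yE -iterD; exact: suppI.
pose s := traject f y d.
exists s; split.
  split=> //; first by rewrite /s; case: (d) d0.
  move=> q; rewrite size_traject => qd dd.
  have nthE r : (r < d)%N -> nth dd s r = iter r f y.
    by move=> rd; rewrite (set_nth_default y) ?size_traject // nth_traject.
  rewrite nthE //; have -> : nth dd s (q.+1 %% d) = f (iter q f y).
    case: (ltngtP q.+1 d) => [h|h|h].
    - by rewrite modn_small // nthE.
    - by rewrite ltnS leqNgt qd in h.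
    - by rewrite h modnn nthE //= -iterS h dy.
  by apply/arcbP; exact: (fP _).1.
have P0 : 0 < \prod_(j <- s) `|x j| ^+ N.
  by rewrite big_seq; apply: prodr_gt0 => j js; rewrite exprn_gt0 // normr_gt0 suppS.
have H : \prod_(j <- s) (`|z - c j| * `|x j| ^+ N)
      <= \prod_(j <- s) (rad j * `|x (f j)| ^+ N).
  by apply: ler_prod => j _; rewrite key andbT mulr_ge0 // exprn_ge0.
rewrite !big_split /= in H.
have Hf : \prod_(j <- s) `|x (f j)| ^+ N = \prod_(j <- s) `|x j| ^+ N.
  by apply: esym; rewrite -(perm_big _ (@perm_cycle _ f y d d0 dy)) big_map.
by rewrite Hf ler_pM2r // in H.
Qed.
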